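(* Let $p\ge2$, $q\ge2$, and let $\mathcal M_{\mathrm{reg}}$, $\mathcal M_i$ and $\mathcal A_{\mathrm{class}}$ be as in the context. Let $\tilde a,\tilde b\in\mathcal M_{\mathrm{reg}}$ be such that there is no $i\in\{1,\dots,p\}$ with $\tilde a\in\mathcal M_i$ and $\tilde b\in\mathcal M_i$. Then some function in $\mathcal A_{\mathrm{class}}$ takes different values at $\tilde a$ and $\tilde b$.
   Context: Let $\Gamma=\mathbb{R}^{2(p+q)}$ with coordinates $(\boldsymbol u,\boldsymbol p,\boldsymbol v,\boldsymbol\pi)$, $\boldsymbol u,\boldsymbol p\in\mathbb{R}^p$, $\boldsymbol v,\boldsymbol\pi\in\mathbb{R}^q$. Let $\bar\Gamma$ be the set where $H_1=\tfrac12(\boldsymbol p^2-\boldsymbol v^2)$, $H_2=\tfrac12(\boldsymbol\pi^2-\boldsymbol u^2)$ and $D=\boldsymbol u\cdot\boldsymbol p-\boldsymbol v\cdot\boldsymbol\pi$ all vanish. ${\mathrm{SL}}(2,\mathbb{R})$ acts on $\Gamma$ by $(\boldsymbol u,\boldsymbol p)^T\mapsto g(\boldsymbol u,\boldsymbol p)^T$, $(\boldsymbol\pi,\boldsymbol v)^T\mapsto g(\boldsymbol\pi,\boldsymbol v)^T$ (acting componentwise on the pairs $(u_i,p_i)$, $(\pi_j,v_j)$), preserving $\bar\Gamma$. Let $\bar\Gamma_{\mathrm{reg}}$ be the set of points of $\bar\Gamma$ at which both pairs $(\boldsymbol u,\boldsymbol p)$ and $(\boldsymbol v,\boldsymbol\pi)$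 are linearly independent, and $\mathcal M_{\mathrm{reg}}=\bar\Gamma_{\mathrm{reg}}/{\mathrm{SL}}(2,\mathbb{R})$. For $x_k=(u_k,p_k)$ ($1\le k\le p$) and $x_{p+k}=(\pi_k,v_k)$ ($1\le k\le q$), set $\mathcal O_{kj}=x_k\times x_j$ (the scalar cross product on $\mathbb{R}^2$); these are gauge invariant, and $\mathcal A_{\mathrm{class}}$ is the algebra of functions on $\mathcal M_{\mathrm{reg}}$ generated by them. For $1\le i\le p$, $\mathcal M_i$ is the set of points of $\mathcal M_{\mathrm{reg}}$ having a representative satisfying $\boldsymbol u^2=\boldsymbol p^2=\boldsymbol v^2=\boldsymbol\pi^2>0$, $\boldsymbol u\cdot\boldsymbol p=\boldsymbol v\cdot\boldsymbol\pi=0$ and $u_i^2+p_i^2>0$. *)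

(* Defs.v *)
From HB Require Import structures.
From mathcomp Require Import all_boot all_order all_algebra.
From mathcomp Require Import reals.
Set Implicit Arguments. Unset Strict Implicit. Unset Printing Implicit Defensive.
Import Order.TTheory GRing.Theory Num.Theory.
Local Open Scope ring_scope.

Section Defs.
Variables (R : realType) (p q : nat).

Record point := Point {
  pu : 'I_p -> R; pp : 'I_p -> R;
  pv : 'I_q -> R; ppi : 'I_q -> R }.

Definition dot n (a b : 'I_n -> R) : R := \sum_(i < n) a i * b i.

Definition H1 (x : point) : R := (dot (pp x) (pp x) - dot (pv x) (pv x)) / 2.
Definition H2 (x : point) : R := (dot (ppi x) (ppi x) - dot (pu x) (pu x)) / 2.
Definition Dc (x : point) : R := dot (pu x) (pp x) - dot (pv x) (ppi x).

Definition in_Gbar (x : point) : Prop := H1 x = 0 /\ H2 x = 0 /\ Dc x = 0.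

Definition lin_indep2 n (a b : 'I_n -> R) : Prop :=
  forall c d : R, (forall i, c * a i + d * b i = 0) -> c = 0 /\ d = 0.

Definition in_Greg (x : point) : Prop :=
  in_Gbar x /\ lin_indep2 (pu x) (pp x) /\ lin_indep2 (pv x) (ppi x).

Record mat2 := Mat2 { ga : R; gb : R; gc : R; gd : R }.
Definition det2 (g : mat2) : R := ga g * gd g - gb g * gc g.

Definition act (g : mat2) (x : point) : point :=
  Point (fun i => ga g * pu x i + gb g * pp x i)
        (fun i => gc g * pu x i + gd g * pp x i)
        (fun j => gc g * ppi x j + gd g * pv x j)
        (fun j => ga g * ppi x j + gb g * pv x j).

(* x_k = (u_k, p_k) for k < p,  x_{p+k} = (pi_k, v_k) *)
Definition xvec (x : point) (k : 'I_(p + q)) : R * R :=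
  match split k with
  | inl i => (pu x i, pp x i)
  | inr j => (ppi x j, pv x j)
  end.

Definition cross2 (a b : R * R) : R := a.1 * b.2 - a.2 * b.1.

Definition Ofun (k j : 'I_(p + q)) (x : point) : R := cross2 (xvec x k) (xvec x j).

(* The algebra generated by the O_kj (as functions on representatives;
   all its elements are gauge invariant). *)
Inductive in_Aclass : (point -> R) -> Prop :=
  | A_const c : in_Aclass (fun _ => c)
  | A_gen k j : in_Aclass (Ofun k j)
  | A_add f g : in_Aclass f -> in_Aclass g -> in_Aclass (fun x => f x + g x)
  | A_mul f g : in_Aclass f -> in_Aclass g -> in_Aclass (fun x => f x * g x).

(* The orbit of x lies in M_i: some representative g.x has the stated form. *)
Definition in_Mi (i : 'I_p) (x : point) : Prop :=
  exists g : mat2, det2 g = 1 /\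
    let y := act g x in
    dot (pu y) (pu y) = dot (pp y) (pp y) /\
    dot (pp y) (pp y) = dot (pv y) (pv y) /\
    dot (pv y) (pv y) = dot (ppi y) (ppi y) /\
    0 < dot (pu y) (pu y) /\
    dot (pu y) (pp y) = 0 /\ dot (pv y) (ppi y) = 0 /\
    0 < pu y i ^+ 2 + pp y i ^+ 2.

End Defs.

(* Main.v *)
Require Import Defs.
From HB Require Import structures.
From mathcomp Require Import all_boot all_order all_algebra.
From mathcomp Require Import reals.
From mathcomp Require Import ring lra.
Import Order.TTheory GRing.Theory Num.Theory.
Local Open Scope ring_scope.

Section Aux.
Variables (R : realType) (p q : nat).

Lemma split_lsh (i : 'I_p) : split (lshift q i) = inl i.
Proof. exact: (unsplitK (inl _ i)). Qed.

Lemma dot_lin n (x y : 'I_n -> R) a b c d :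
  dot (fun i => a * x i + b * y i) (fun i => c * x i + d * y i) =
  a * c * dot x x + (a * d + b * c) * dot x y + b * d * dot y y.
Proof.
rewrite /dot.
transitivity (\sum_(i < n) (a * c * (x i * x i) + (a * d + b * c) * (x i * y i)
   + b * d * (y i * y i))).
  by apply: eq_bigr => i _; ring.
by rewrite !big_split /= -!mulr_sumr.
Qed.

Lemma dot_sym n (x y : 'I_n -> R) : dot x y = dot y x.
Proof. by rewrite /dot; apply: eq_bigr => i _; rewrite mulrC. Qed.

Lemma dot_pos n (x : 'I_n -> R) k : x k != 0 -> 0 < dot x x.
Proof.
move=> hk; rewrite /dot (bigD1 k) //=.
have h1 : 0 < x k * x k by rewrite -expr2 exprn_even_gt0 //= hk orbT.
have h2 : 0 <= \sum_(i < n | i != k) x i * x i.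
  by apply: sumr_ge0 => i _; rewrite -expr2 sqr_ge0.
lra.
Qed.

Lemma alg1 (A B C s : R) : A != 0 -> s != 0 ->
  - C / (A * s) * (- C / (A * s)) * A + (- C / (A * s) * s^-1 + s^-1 * (- C / (A * s))) * C + s^-1 * s^-1 * B
  = (A * B - C * C) / (A * (s * s)).
Proof. move=> A0 s0; field; by rewrite ?A0 ?s0. Qed.

Lemma alg2 (A B C s : R) : A != 0 -> s != 0 ->
  s * (- C / (A * s)) * A + (s / s + 0 * (- C / (A * s))) * C + 0 / s * B = 0.
Proof. move=> A0 s0; field; by rewrite ?A0 ?s0. Qed.

Lemma alg4 (A B C s : R) : A != 0 -> s != 0 ->
  - C / (A * s) * s * A + (- C / (A * s) * 0 + s^-1 * s) * C + s^-1 * 0 * B = 0.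
Proof. move=> A0 s0; field; by rewrite ?A0 ?s0. Qed.

Lemma alg3 (A C t B : R) : A != 0 -> t = C / A ->
  A * (t * t * A - 2 * t * C + B) = A * B - C * C.
Proof. move=> A0 ->; field; by rewrite ?A0 ?s0. Qed.

Definition nz (x : point R p q) i := (pu x i != 0) || (pp x i != 0).

Lemma exists_nz (x : point R p q) : lin_indep2 (pu x) (pp x) -> exists k, pu x k != 0.
Proof.
move=> H; case: (boolP [exists k, pu x k != 0]) => [/existsP //|/existsPn Hn]; exfalso.
have [] := H 1 0 => [i|]; last by move=> /eqP; rewrite oner_eq0.
by move: (Hn i); rewrite negbK => /eqP ->; rewrite mulr0 mul0r addr0.
Qed.

Lemma sep (x : point R p q) i : lin_indep2 (pu x) (pp x) -> nz x i ->
  exists k, pu x i * pp x k - pp x i * pu x k != 0.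
Proof.
move=> H hi.
case: (boolP [exists k, pu x i * pp x k - pp x i * pu x k != 0]) => [/existsP //|/existsPn Hn]; exfalso.
have Hp : forall k, pp x i * pu x k + - pu x i * pp x k = 0.
  move=> k; move: (Hn k); rewrite negbK => /eqP e.
  rewrite -[RHS]oppr0 -e; ring.
have [h1 h2] := H _ _ Hp.
by move/eqP: h2; rewrite oppr_eq0 => /eqP h2; move: hi; rewrite /nz h1 h2 eqxx.
Qed.

Lemma Mi_of (x : point R p q) i : in_Greg x -> nz x i -> in_Mi i x.
Proof.
move=> [[h1 [h2 h3]] [Li _]] hi.
set A := dot (pu x) (pu x); set B := dot (pp x) (pp x); set C := dot (pu x) (pp x).
have hPP : dot (ppi x) (ppi x) = A.
  by move: h2; rewrite /H2 => /eqP; rewrite mulf_eq0 invr_eq0 pnatr_eq0 orbF subr_eq0 => /eqP.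
have hVV : dot (pv x) (pv x) = B.
  by move: h1; rewrite /H1 => /eqP; rewrite mulf_eq0 invr_eq0 pnatr_eq0 orbF subr_eq0 => /eqP.
have hVP : dot (pv x) (ppi x) = C.
  by move: h3; rewrite /Dc => /eqP; rewrite subr_eq0 => /eqP.
have [k0 hk0] := exists_nz x Li.
have Apos : 0 < A by exact: dot_pos hk0.
have A0 : A != 0 by rewrite gt_eqF.
set t := C / A.
set w := fun k => (- t) * pu x k + 1 * pp x k.
have [k1 hk1] : exists k, w k != 0.
  case: (boolP [exists k, w k != 0]) => [/existsP //|/existsPn Hn]; exfalso.
  have Hp : forall k, - t * pu x k + 1 * pp x k = 0.
    by move=> k; move: (Hn k); rewrite negbK => /eqP.
  have [_] := Li _ _ Hp.
  by move=> /eqP; rewrite oner_eq0.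
have wpos : 0 < dot w w by exact: dot_pos hk1.
have ew : dot w w = t * t * A - 2 * t * C + B.
  rewrite /w dot_lin -/A -/B -/C; ring.
set D := A * B - C * C.
have eD : D = A * dot w w by rewrite ew /D alg3.
have Dpos : 0 < D by rewrite eD mulr_gt0.
set r := Num.sqrt D.
have rpos : 0 < r by rewrite sqrtr_gt0.
have rr : r * r = D by rewrite -expr2 sqr_sqrtr // ltW.
set s := Num.sqrt (r / A).
have spos : 0 < s by rewrite sqrtr_gt0 divr_gt0.
have s0 : s != 0 by rewrite gt_eqF.
have ss : s * s * A = r.
  by rewrite -expr2 sqr_sqrtr ?divfK // ltW // divr_gt0.
exists (Mat2 s 0 (- C / (A * s)) s^-1); split.
  by rewrite /det2 /= mul0r subr0 mulfV.
rewrite /=.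
rewrite !dot_lin (dot_sym _ (ppi x) (pv x)) hPP hVV hVP -/A -/B -/C.
have key : s * s * A = - C / (A * s) * (- C / (A * s)) * A + (- C / (A * s) * s^-1 + s^-1 * (- C / (A * s))) * C + s^-1 * s^-1 * B.
  have -> : - C / (A * s) * (- C / (A * s)) * A + (- C / (A * s) * s^-1 + s^-1 * (- C / (A * s))) * C + s^-1 * s^-1 * B
     = D / (A * (s * s)) by rewrite /D; apply: alg1.
  apply: (@mulIf _ (A * (s * s))); first by rewrite mulf_neq0 // mulf_neq0.
  rewrite divfK; last by rewrite mulf_neq0 // mulf_neq0.
  rewrite -rr -ss; ring.
split; first by rewrite key; ring.
split; first by ring.
split; first by rewrite -key; ring.
split.
  have -> : s*s*A + (s*0+0*s)*C + 0*0*B = s*s*A by ring.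
  by rewrite ss.
split; first exact: alg2.
split; first exact: alg4.
move: hi; rewrite /nz.
case: (eqVneq (pu x i) 0) => [eu /= ep|eu _].
  rewrite eu !mulr0 add0r mul0r expr0n /= add0r.
  by rewrite add0r exprn_even_gt0 //= mulf_neq0 // invr_eq0.
have h : 0 < (s * pu x i + 0 * pp x i) ^+ 2.
  by rewrite exprn_even_gt0 //= mul0r addr0 mulf_neq0.
have := sqr_ge0 (- C / (A * s) * pu x i + s^-1 * pp x i).
lra.
Qed.

End Aux.
Arguments nz {R p q}.

Theorem mainTheorem4 (R : realType) (p q : nat) (hp : (2 <= p)%N) (hq : (2 <= q)%N)
  (a b : point R p q) :
  in_Greg a -> in_Greg b ->
  ~ (exists i : 'I_p, in_Mi i a /\ in_Mi i b) ->
  exists f : point R p q -> R, in_Aclass f /\ f a <> f b.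
Proof.
move=> Ga Gb Hn.
case: (boolP [exists i, nz a i && ~~ nz b i]) => [/existsP [i /andP [nai nbi]]|H1].
  have [k hk] := @sep R p q a i Ga.2.1 nai.
  exists (Ofun (lshift q i) (lshift q k)); split; first by constructor.
  rewrite /Ofun /xvec !split_lsh /cross2 /=.
  move: nbi; rewrite /nz negb_or !negbK => /andP [/eqP -> /eqP ->].
  by rewrite !mul0r subrr; apply/eqP.
case: (boolP [exists i, nz b i && ~~ nz a i]) => [/existsP [i /andP [nbi nai]]|H2].
  have [k hk] := @sep R p q b i Gb.2.1 nbi.
  exists (Ofun (lshift q i) (lshift q k)); split; first by constructor.
  rewrite /Ofun /xvec !split_lsh /cross2 /=.
  move: nai; rewrite /nz negb_or !negbK => /andP [/eqP -> /eqP ->].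
  by rewrite !mul0r subrr => /esym; apply/eqP.
exfalso; apply: Hn.
have [i hi] := @exists_nz R p q a Ga.2.1.
have nai : nz a i by rewrite /nz hi.
have nbi : nz b i.
  by move/existsPn: H1 => /(_ i); rewrite nai /= negbK.
by exists i; split; apply: (@Mi_of R p q).
Qed.
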